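(* Let $\nu\ge1$, $\omega>0$, $\lambda_1,\dots,\lambda_\nu\ge0$, $c_{\omega,\lambda}=(\omega^2+4\sum_{j=1}^\nu\lambda_j)^{1/2}$, $L$ a positive integer, $\Lambda_L=(-L,L]^\nu\cap\mathbb Z^\nu$, $\Lambda_L^*=\{\pi x/L:x\in\Lambda_L\}$, $\gamma(k)=\sqrt{\omega^2+4\sum_j\lambda_j\sin^2(k_j/2)}$, and define for $x\in\Lambda_L$, $t\in\mathbb R$ $$h^{(L)}_{1,t}(x)=\frac i2\,\mathrm{Im}\Big[\frac1{|\Lambda_L|}\sum_{k\in\Lambda_L^*}\Big(\gamma(k)+\frac1{\gamma(k)}\Big)e^{ik\cdot x-2i\gamma(k)t}\Big]+\mathrm{Re}\Big[\frac1{|\Lambda_L|}\sum_{k\in\Lambda_L^*}e^{ik\cdot x-2i\gamma(k)t}\Big],$$ $$h^{(L)}_{2,t}(x)=\frac i2\,\mathrm{Im}\Big[\frac1{|\Lambda_L|}\sum_{k\in\Lambda_L^*}\Big(\gamma(k)-\frac1{\gamma(k)}\Big)e^{ik\cdot x-2i\gamma(k)t}\Big].$$ Then for $m=1,2$, all $\mu>0$, $t\in\mathbb R$, $x\in\Lambda_L$ and every $L$, $$|h^{(L)}_{m,t}(x)|\le\Big(1+\tfrac12c_{\omega,\lambda}e^{\mu/2}+\tfrac12c_{\omega,\lambda}^{-1}\Big)e^{-\mu\left(|x|-c_{\omega,\lambda}\max\left(\frac2\mu,e^{(\mu/2)+1}\right)|t|\right)},$$ where $|x|=\sum_{j=1}^\nu|x_j|$.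 *)

(* Defs.v *)
From HB Require Import structures.
From mathcomp Require Import all_boot all_order all_algebra.
From mathcomp Require Import all_classical all_reals all_analysis.
From mathcomp Require Import complex.

Set Implicit Arguments.
Unset Strict Implicit.
Unset Printing Implicit Defensive.

Import Order.TTheory GRing.Theory Num.Theory.
Local Open Scope ring_scope.
Local Open Scope complex_scope.

Section Defs.
Variable R : realType.
Variable nu : nat.

(* Lattice Lambda_L = (-L, L]^nu ∩ Z^nu, parametrised bijectively by
   y : {ffun 'I_nu -> 'I_(2L)} via y |-> (j |-> y j - L + 1). *)
Definition latpt (L : nat) (y : {ffun 'I_nu -> 'I_(2 * L)}) : 'I_nu -> int :=
  fun j => (nat_of_ord (y j))%:Z - L%:Z + 1.

Definition inLambda (L : nat) (x : 'I_nu -> int) : Prop :=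
  forall j, - (L%:Z) < x j <= L%:Z.

Definition cardLambda (L : nat) : R := ((2 * L) ^ nu)%:R.

Definition dualpt (L : nat) (y : {ffun 'I_nu -> 'I_(2 * L)}) : 'I_nu -> R :=
  fun j => pi * (latpt y j)%:~R / L%:R.

Definition dotk (k : 'I_nu -> R) (x : 'I_nu -> int) : R :=
  \sum_(j < nu) k j * (x j)%:~R.

Definition gam (omega : R) (lam : 'I_nu -> R) (k : 'I_nu -> R) : R :=
  Num.sqrt (omega ^+ 2 + 4 * \sum_(j < nu) lam j * (sin (k j / 2)) ^+ 2).

Definition cwl (omega : R) (lam : 'I_nu -> R) : R :=
  Num.sqrt (omega ^+ 2 + 4 * \sum_(j < nu) lam j).

Definition cexpi (theta : R) : R[i] := (cos theta +i* sin theta)%C.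

Definition lsum (omega : R) (lam : 'I_nu -> R) (L : nat)
    (f : R -> R) (t : R) (x : 'I_nu -> int) : R[i] :=
  ((cardLambda L)^-1)%:C *
  \sum_(y : {ffun 'I_nu -> 'I_(2 * L)})
     (f (gam omega lam (dualpt y)))%:C *
     cexpi (dotk (dualpt y) x - 2 * gam omega lam (dualpt y) * t).

Definition h1 (omega : R) (lam : 'I_nu -> R) (L : nat) (t : R)
    (x : 'I_nu -> int) : R[i] :=
  'i * ((@complex.Im R (lsum omega lam L (fun g => g + g^-1) t x)) / 2)%:C
  + (@complex.Re R (lsum omega lam L (fun _ => 1) t x))%:C.

Definition h2 (omega : R) (lam : 'I_nu -> R) (L : nat) (t : R)
    (x : 'I_nu -> int) : R[i] :=
  'i * ((@complex.Im R (lsum omega lam L (fun g => g - g^-1) t x)) / 2)%:C.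

Definition l1norm (x : 'I_nu -> int) : R := \sum_(j < nu) (`|x j|)%:~R.

Definition hbound (omega : R) (lam : 'I_nu -> R) (mu t : R)
    (x : 'I_nu -> int) : R :=
  let c := cwl omega lam in
  (1 + c * expR (mu / 2) / 2 + c^-1 / 2) *
  expR (- mu * (l1norm x - c * Num.max (2 / mu) (expR (mu / 2 + 1)) * `|t|)).

End Defs.

(* Main.v *)
Require Import Defs.
From HB Require Import structures.
From mathcomp Require Import all_boot all_order all_algebra.
From mathcomp Require Import all_classical all_reals all_analysis.
From mathcomp Require Import complex.
From mathcomp Require Import ring lra zify.
Import Order.TTheory GRing.Theory Num.Theory numFieldNormedType.Exports.
Local Open Scope ring_scope.
Section Scal.
Variable R : realType.

Definition Kc (mu : R) := mu * Num.max (2 / mu) (expR (mu / 2 + 1)) / 2.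

Lemma Kc_ge1 mu : 0 < mu -> 1 <= Kc mu.
Proof.
move=> mu0; rewrite /Kc.
have h : 2 / mu <= Num.max (2 / mu) (expR (mu / 2 + 1)) by rewrite le_max lexx.
have : mu * (2 / mu) / 2 <= mu * Num.max (2 / mu) (expR (mu / 2 + 1)) / 2.
  by rewrite ler_pM2r // ler_pM2l.
by rewrite mulrCA divff ?gt_eqF // mulr1 divff.
Qed.

Lemma Kc_geexp mu : 0 < mu -> 2 <= mu * expR 1 -> expR (mu / 2) <= Kc mu.
Proof.
move=> mu0 h2; rewrite /Kc.
have h : expR (mu / 2 + 1) <= Num.max (2 / mu) (expR (mu / 2 + 1)) by rewrite le_max lexx orbT.
apply: (le_trans _ (_ : mu * expR (mu / 2 + 1) / 2 <= _)); last by rewrite ler_pM2r // ler_pM2l.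
rewrite expRD.
have e0 : 0 < expR (mu / 2) := expR_gt0 _.
have : expR (mu / 2) * 2 <= expR (mu / 2) * (mu * expR 1) by rewrite ler_pM2l.
move=> H; rewrite ler_pdivlMr //; lra.
Qed.

Lemma e_ge1 : 1 <= expR (1 : R).
Proof. by rewrite -expR0 ler_expR. Qed.

Lemma expR_ge1 (y : R) : 0 <= y -> 1 <= expR y.
Proof. by move=> y0; rewrite -expR0 ler_expR. Qed.

Lemma scalP1 (mu s d p : R) : 0 < mu -> 0 <= s -> 0 <= d -> p <= 1 ->
  (forall th, 0 <= th -> p <= expR (expR th * s - 2 * th * d)) ->
  p <= expR (Kc mu * s - mu * d).
Proof.
move=> mu0 s0 d0 p1 hs.
have K1 := Kc_ge1 mu mu0.
have [h2|h2] := leP 2 (mu * expR 1).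
  apply: (le_trans (hs (mu / 2) _)); first by rewrite divr_ge0 // ltW.
  rewrite ler_expR.
  have := Kc_geexp mu mu0 h2 => hk.
  have : expR (mu / 2) * s <= Kc mu * s by rewrite ler_wpM2r.
  have -> : 2 * (mu / 2) * d = mu * d by field.
  lra.
have [hsd|hsd] := leP (mu * d) s.
  apply: (le_trans p1); apply: expR_ge1.
  have : s <= Kc mu * s by rewrite ler_peMl.
  lra.
apply: (le_trans (hs 1 ler01)); rewrite ler_expR mulr1.
set e := expR 1 in h2 *.
have e1 : 1 <= e := e_ge1.
have f1 : 0 <= (e - 1) * (mu * d - s) by rewrite mulr_ge0 // subr_ge0 // ltW.
have f2 : 0 <= (Kc mu - 1) * s by rewrite mulr_ge0 // subr_ge0.
have f3 : 0 <= (2 - mu * e) * d by rewrite mulr_ge0 // subr_ge0 ltW.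
nra.
Qed.

Lemma scalP2 (mu s d p : R) : 0 < mu -> 0 <= s -> 0 <= d -> p <= 1 ->
  (forall th, 0 <= th -> p <= expR (th + expR th * s - 2 * th * d)) ->
  p <= expR (mu / 2 + (Kc mu * s - mu * d)).
Proof.
move=> mu0 s0 d0 p1 hs.
have K1 := Kc_ge1 mu mu0.
have [h2|h2] := leP 2 (mu * expR 1).
  apply: (le_trans (hs (mu / 2) _)); first by rewrite divr_ge0 // ltW.
  rewrite ler_expR.
  have := Kc_geexp mu mu0 h2 => hk.
  have : expR (mu / 2) * s <= Kc mu * s by rewrite ler_wpM2r.
  have -> : 2 * (mu / 2) * d = mu * d by field.
  lra.
have [hsd|hsd] := leP (mu * d - mu / 2) s.
  apply: (le_trans p1); apply: expR_ge1.
  have : s <= Kc mu * s by rewrite ler_peMl.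
  lra.
apply: (le_trans (hs 1 ler01)); rewrite ler_expR mulr1.
set e := expR 1 in h2 *.
have e1 : 1 <= e := e_ge1.
have dpos : 0 <= d - 1 / 2.
  have : 0 < mu * (d - 1/2) by rewrite mulrBr; lra.
  by rewrite pmulr_rgt0 // => /ltW.
have f1 : 0 <= (e - 1) * (mu * d - mu / 2 - s) by rewrite mulr_ge0 // subr_ge0 // ltW.
have f2 : 0 <= (Kc mu - 1) * s by rewrite mulr_ge0 // subr_ge0.
have f3 : 0 <= (2 - mu * e) * (d - 1/2) by rewrite mulr_ge0 // subr_ge0 ltW.
nra.
Qed.

Lemma exp_partial (y : R) (M : nat) : 0 <= y ->
  \sum_(m < M) y ^+ m / m`!%:R <= expR y.
Proof.
move=> y0.
have cv := @is_cvg_series_exp_coeff R y.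
have nd : nondecreasing_seq (series (exp_coeff y)).
  apply/nondecreasing_seqP => n; rewrite /series /= big_nat_recr //= lerDl.
  by rewrite /exp_coeff /= divr_ge0 // exprn_ge0.
have := nondecreasing_cvgn_le nd cv M.
by rewrite /series /= big_mkord.
Qed.

Lemma exp_even (y : R) (M : nat) : 0 <= y ->
  \sum_(n < M) y ^+ (n.*2) / (n.*2)`!%:R <= expR y.
Proof.
move=> y0; apply: (le_trans _ (@exp_partial y M.*2 y0)).
elim: M => [|M IH]; first by rewrite !big_ord0.
rewrite big_ord_recr /= doubleS !big_ord_recr /= -addrA lerD //.
by rewrite lerDl divr_ge0 // exprn_ge0.
Qed.

Lemma exp_odd (y : R) (M : nat) : 0 <= y ->
  \sum_(n < M) y ^+ (n.*2.+1) / (n.*2.+1)`!%:R <= expR y.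
Proof.
move=> y0; apply: (le_trans _ (@exp_partial y M.*2 y0)).
elim: M => [|M IH]; first by rewrite !big_ord0.
rewrite big_ord_recr /= doubleS !big_ord_recr /= -addrA lerD //.
by rewrite lerDr divr_ge0 // exprn_ge0.
Qed.

Lemma lim_sum_bound (I : finType) (w : I -> R) (u : I -> nat -> R) (l : I -> R) (B : R) :
  (forall i, (u i @ \oo --> l i)%classic) ->
  (forall M, `|\sum_i w i * u i M| <= B) -> `|\sum_i w i * l i| <= B.
Proof.
move=> cu hB.
have cv : forall s : seq I, ((fun n => \sum_(i <- s) w i * u i n) @ \oo --> \sum_(i <- s) w i * l i)%classic.
  elim => [|a s IH].
    rewrite big_nil; under eq_fun do rewrite big_nil; exact: cvg_cst.
  rewrite big_cons; under eq_fun do rewrite big_cons.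
  apply: cvgD => //; exact: cvgMr.
have cn := cv (index_enum I).
have cvv : cvgn (fun n => \sum_i w i * u i n) by apply/cvg_ex; eexists; exact: cn.
rewrite -(cvg_lim _ cn) // ler_norml; apply/andP; split.
  apply: limr_ge => //; apply: nearW => M.
  by have := hB M; rewrite ler_norml => /andP[].
apply: limr_le => //; apply: nearW => M.
by have := hB M; rewrite ler_norml => /andP[].
Qed.

End Scal.
Section Der.
Variable R : realType.

Lemma ndecr_of_derive (f df : R -> R) (a b : R) :
  (forall x : R, is_derive x (1 : R) f (df x)) -> (forall x, a < x < b -> 0 <= df x) ->
  a <= b -> f a <= f b.
Proof.
move=> hd hpos ab.
apply: (@ger0_derive1_ndecr R f a b) => //.
- move=> x; rewrite in_itv /= => hx.
  by rewrite derive1E derive_val; exact: hpos.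
- apply: continuous_subspaceT => x.
  apply/differentiable_continuous/derivable1_diffP.
  by case: (hd x).
Qed.

Lemma is_derive_divc (f : R -> R) (u df A : R) :
  is_derive u (1:R) f df -> is_derive u (1:R) (fun z => f z / A) (df / A).
Proof.
move=> hf.
have -> : (fun z => f z / A) = A^-1 \*: f by apply/funext => z; rewrite /= /GRing.scale /= mulrC.
have h := @is_deriveZ R R^o R^o f (A^-1) u 1 df hf.
by rewrite /GRing.scale /= mulrC in h.
Qed.

Lemma deriv_bound (Phi P : R -> R) (A B : R) : 0 < A ->
  (forall u : R, is_derive u (1 : R) Phi (P u)) -> Phi 0 = 0 ->
  (forall u, 0 <= u -> `|P u| <= expR (A * u - B)) ->
  forall t, 0 <= t -> `|Phi t| <= expR (A * t - B) / A.
Proof.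
move=> A0 hd Phi0 hP t t0.
pose Psi := fun u : R => expR (A * u - B) / A.
have dPsi (u : R) : is_derive u (1 : R) Psi (expR (A * u - B)).
  have hlin : is_derive u (1 : R) (fun z : R => A * z - B) A.
    have h : is_derive u (1:R) (fun z : R => A * z - B) (A * 1 - 0) by typeclasses eauto.
    by rewrite mulr1 subr0 in h.
  pose E := fun z : R => expR (A * z - B).
  have hexp : is_derive u (1:R) E (expR (A * u - B) * A).
    exact: (@is_derive1_comp R expR (fun z : R => A * z - B) u _ _ (is_derive_expR (A * u - B)) hlin).
  have -> : Psi = (fun z => E z / A) by apply/funext => z.
  have h := @is_derive_divc E u _ A hexp.
  by rewrite mulfK ?gt_eqF // in h.
have h1 : Psi 0 - Phi 0 <= Psi t - Phi t.
  apply: (@ndecr_of_derive (Psi - Phi) (fun u => expR (A * u - B) - P u)) => //.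
  move=> u /andP[u0 _]; rewrite subr_ge0.
  by apply: le_trans (hP u (ltW u0)); exact: ler_norm.
have h2 : Psi 0 + Phi 0 <= Psi t + Phi t.
  apply: (@ndecr_of_derive (Psi + Phi) (fun u => expR (A * u - B) + P u)) => //.
  move=> u /andP[u0 _]; rewrite -lerBlDr sub0r.
  by apply: le_trans (hP u (ltW u0)); rewrite -normrN; exact: ler_norm.
move: h1 h2; rewrite Phi0 subr0 addr0.
have : 0 <= Psi 0 by rewrite /Psi divr_ge0 // ?expR_ge0 // ltW.
rewrite /Psi => ? ? ?.
rewrite ler_norml; apply/andP; split; lra.
Qed.

End Der.
Section Trig.
Variable R : realType.

Lemma cexpi0 : cexpi (0 : R) = 1.
Proof. by rewrite /cexpi cos0 sin0. Qed.

Lemma cexpiD (a b : R) : cexpi (a + b) = cexpi a * cexpi b.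
Proof.
rewrite /cexpi cosD sinD.
have -> : ((cos a +i* sin a) * (cos b +i* sin b))%C =
  Complex (cos a * cos b - sin a * sin b) (cos a * sin b + sin a * cos b) by [].
by congr Complex; ring.
Qed.

Lemma cexpi_sum (I : Type) (s : seq I) (f : I -> R) :
  cexpi (\sum_(i <- s) f i) = \prod_(i <- s) cexpi (f i).
Proof.
elim: s => [|a s IH]; first by rewrite !big_nil cexpi0.
by rewrite !big_cons cexpiD IH.
Qed.

Lemma cexpiMn (a : R) (n : nat) : cexpi (n%:R * a) = cexpi a ^+ n.
Proof.
elim: n => [|n IH]; first by rewrite mul0r cexpi0 expr0.
by rewrite -addn1 natrD mulrDl mul1r cexpiD IH exprD expr1.
Qed.

Lemma cexpi_2pin (b : R) (n : nat) : cexpi (b + 2 * pi * n%:R) = cexpi b.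
Proof.
have -> : 2 * (pi : R) * n%:R = pi *+ 2 *+ n by ring.
by rewrite /cexpi (periodicn (@cosD2pi R)) (periodicn (@sinD2pi R)).
Qed.

Lemma cexpi_2piz (a : R) (m : int) : cexpi (a + 2 * pi * m%:~R) = cexpi a.
Proof.
case: m => n; first exact: cexpi_2pin.
set b := a + _.
have -> : a = b + 2 * pi * n.+1%:R by rewrite /b; rewrite NegzE intrN; ring.
by rewrite cexpi_2pin.
Qed.

Lemma cexpi_Re (a : R) : complex.Re (cexpi a) = cos a. Proof. by []. Qed.
Lemma cexpi_Im (a : R) : complex.Im (cexpi a) = sin a. Proof. by []. Qed.

Lemma Re_sum (I : Type) (s : seq I) (f : I -> R[i]) :
  complex.Re (\sum_(i <- s) f i) = \sum_(i <- s) complex.Re (f i).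
Proof.
elim: s => [|a s IH]; first by rewrite !big_nil.
by rewrite !big_cons -IH; case: (f a); case: (\sum_(j <- s) f j).
Qed.

Lemma Im_sum (I : Type) (s : seq I) (f : I -> R[i]) :
  complex.Im (\sum_(i <- s) f i) = \sum_(i <- s) complex.Im (f i).
Proof.
elim: s => [|a s IH]; first by rewrite !big_nil.
by rewrite !big_cons -IH; case: (f a); case: (\sum_(j <- s) f j).
Qed.

Lemma cexpi_ne1 (rho Lr : R) : 0 < Lr -> 0 < rho < 2 * Lr -> cexpi (pi * rho / Lr) != 1.
Proof.
move=> L0 /andP[r0 r2].
set th := pi * rho / Lr.
have hth : th * Lr = pi * rho by rewrite /th mulfVK ?gt_eqF.
have pi0 := @pi_gt0 R.
apply/negP => /eqP h.
have hs : sin th = 0 by move: h; rewrite /cexpi => -[].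
have hc : cos th = 1 by move: h; rewrite /cexpi => -[].
have [hlt|hgt|heq] := ltgtP rho Lr.
- have : 0 < sin th.
    apply: sin_gt0_pi; apply/andP; split; nra.
  by rewrite hs ltxx.
- have : 0 < sin (th - pi).
    apply: sin_gt0_pi; apply/andP; split; nra.
  have : sin th = - sin (th - pi).
    by rewrite -(sinDpi (th - pi)) subrK.
  rewrite hs => /eqP; rewrite eq_sym oppr_eq0 => /eqP ->.
  by rewrite ltxx.
- have : th = pi.
    apply: (mulIf (x := Lr)); first by rewrite gt_eqF.
    by rewrite hth heq.
  move=> hp; move: hc; rewrite hp cospi => /eqP.
  by rewrite -subr_eq0 -opprD oppr_eq0 (_ : (1 + 1 : R) = 2) // pnatr_eq0.
Qed.

End Trig.
Section Lattice.
Variables (R : realType) (nu L : nat).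
Hypothesis hL : (0 < L)%N.
Local Notation Y := {ffun 'I_nu -> 'I_(2 * L)}.

Definition lp (r : 'I_(2 * L)) : int := (r : nat)%:Z - L%:Z + 1.

Lemma L0R : (L%:R : R) != 0.
Proof. by rewrite pnatr_eq0 -lt0n. Qed.

Lemma charsum1 (z : int) : ~~ ((2 * L)%:Z %| z)%Z ->
  \sum_(r < 2 * L) cexpi (pi * (lp r)%:~R / L%:R * z%:~R) = 0 :> R[i].
Proof.
move=> hz.
set be : R := pi * z%:~R / L%:R.
set al : R := pi * (1 - L%:Z)%:~R / L%:R * z%:~R.
have e (r : 'I_(2 * L)) : pi * (lp r)%:~R / L%:R * z%:~R = al + (r : nat)%:R * be.
  rewrite /lp /al /be !intrD !intrN.
  have -> : ((r : nat)%:Z)%:~R = (r : nat)%:R :> R by [].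
  have -> : (L%:Z)%:~R = L%:R :> R by [].
  by field; exact: L0R.
under eq_bigr do rewrite e cexpiD cexpiMn.
rewrite -mulr_sumr.
suff -> : \sum_(i < 2 * L) cexpi be ^+ i = 0 by rewrite mulr0.
have h1 : cexpi be ^+ (2 * L) = 1.
  rewrite -cexpiMn.
  have -> : (2 * L)%:R * be = 0 + 2 * pi * z%:~R.
    by rewrite /be natrM; field; exact: L0R.
  by rewrite cexpi_2piz cexpi0.
have hne : cexpi be != 1.
  have dz := divz_eq z ((2 * L)%:Z).
  set q := (z %/ (2 * L)%:Z)%Z in dz.
  set r0 := (z %% (2 * L)%:Z)%Z in dz.
  have L2 : (0 < (2 * L)%:Z)%R by rewrite ltz_nat muln_gt0.
  have r0ge : (0 <= r0)%R by rewrite modz_ge0 // gt_eqF.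
  have r0lt : (r0 < (2 * L)%:Z)%R by rewrite ltz_pmod.
  have r0ne : r0 != 0.
    by apply: contra hz => /eqP h; apply/dvdz_mod0P.
  have -> : be = pi * r0%:~R / L%:R + 2 * pi * q%:~R.
    rewrite /be {1}dz intrD intrM.
    have -> : ((2 * L)%:Z)%:~R = 2 * L%:R :> R by rewrite -natrM.
    by field; exact: L0R.
  rewrite cexpi_2piz; apply: cexpi_ne1.
    by rewrite ltr0n.
  apply/andP; split.
    by rewrite ltr0z lt_neqAle eq_sym r0ne.
  have : (r0%:~R < ((2 * L)%:Z)%:~R :> R) by rewrite ltr_int.
  by have -> : ((2 * L)%:Z)%:~R = 2 * L%:R :> R by rewrite -natrM.
have : (cexpi be - 1) * \sum_(i < 2 * L) cexpi be ^+ i = 0 by rewrite -subrX1 h1 subrr.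
by move/eqP; rewrite mulf_eq0 subr_eq0 (negbTE hne) /= => /eqP.
Qed.

Lemma charsum (z : 'I_nu -> int) j0 : ~~ ((2 * L)%:Z %| z j0)%Z ->
  \sum_(y : Y) cexpi (dotk (dualpt R y) z) = 0.
Proof.
move=> hz.
have e (y : Y) : cexpi (dotk (dualpt R y) z) =
    \prod_j cexpi (pi * (lp (y j))%:~R / L%:R * (z j)%:~R) by rewrite /dotk cexpi_sum.
under eq_bigr do rewrite e.
rewrite -(bigA_distr_bigA (fun j r => cexpi (pi * (lp r)%:~R / L%:R * (z j)%:~R))).
by rewrite (bigD1 j0) //= charsum1 // mul0r.
Qed.

Lemma cossum (z : 'I_nu -> int) j0 : ~~ ((2 * L)%:Z %| z j0)%Z ->
  \sum_(y : Y) cos (dotk (dualpt R y) z) = 0.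
Proof.
move=> hz; have := charsum z j0 hz => /(congr1 (@complex.Re R)).
by rewrite Re_sum.
Qed.

End Lattice.

Section Local.
Variables (R : realType) (nu : nat) (omega : R) (lam : 'I_nu -> R) (L : nat).
Hypothesis hL : (0 < L)%N.
Hypothesis hlam : forall j, 0 <= lam j.
Local Notation Y := {ffun 'I_nu -> 'I_(2 * L)}.

Definition gg (y : Y) := gam omega lam (dualpt R y) ^+ 2.

Definition Qn (n : nat) (z : 'I_nu -> int) :=
  \sum_(y : Y) gg y ^+ n * cos (dotk (dualpt R y) z).

Definition zshift (z : 'I_nu -> int) (j : 'I_nu) (e : int) : 'I_nu -> int :=
  fun i => z i + (i == j)%:Z * e.

Lemma dotk_shift (k : 'I_nu -> R) z j e :
  dotk k (zshift z j e) = dotk k z + k j * e%:~R.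
Proof.
rewrite /dotk /zshift.
have -> : \sum_(i < nu) k i * (z i + (i == j)%:Z * e)%:~R =
  \sum_(i < nu) (k i * (z i)%:~R + k i * ((i == j)%:Z * e)%:~R).
  by apply: eq_bigr => i _; rewrite intrD mulrDr.
rewrite big_split /=; congr (_ + _).
rewrite (bigD1 j) //= eqxx big1 ?addr0 //; first by rewrite mul1r.
by move=> i /negbTE ->; rewrite mul0r mulr0.
Qed.

Lemma sum_sin_ge0 (y : Y) : 0 <= omega ^+ 2 + 4 * \sum_j lam j * sin (dualpt R y j / 2) ^+ 2.
Proof.
apply: addr_ge0; first exact: sqr_ge0.
apply: mulr_ge0 => //; apply: sumr_ge0 => j _; apply: mulr_ge0 => //; exact: sqr_ge0.
Qed.

Lemma gg_sin (y : Y) : gg y = omega ^+ 2 + 4 * \sum_j lam j * sin (dualpt R y j / 2) ^+ 2.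
Proof. by rewrite /gg /gam sqr_sqrtr // sum_sin_ge0. Qed.

Lemma sin_half_sq (a : R) : 4 * sin (a / 2) ^+ 2 = 2 - 2 * cos a.
Proof.
have -> : cos a = cos ((a / 2) *+ 2) by congr cos; rewrite mulr2n; field.
by rewrite cos_mulr2n sin2cos2 mulr2n; ring.
Qed.

Definition a0 := omega ^+ 2 + 2 * \sum_j lam j.

Lemma gg_cos (y : Y) : gg y = a0 - \sum_j 2 * lam j * cos (dualpt R y j).
Proof.
rewrite gg_sin /a0 mulr_sumr mulr_sumr -addrA; congr (_ + _).
rewrite -sumrB; apply: eq_bigr => j _.
rewrite mulrCA sin_half_sq; ring.
Qed.

Lemma Qrec n z : Qn n.+1 z =
  a0 * Qn n z - \sum_j lam j * (Qn n (zshift z j 1) + Qn n (zshift z j (-1))).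
Proof.
rewrite /Qn.
transitivity (\sum_(y : Y) (a0 * (gg y ^+ n * cos (dotk (dualpt R y) z)) -
   \sum_j lam j * (gg y ^+ n * cos (dotk (dualpt R y) (zshift z j 1)) +
                   gg y ^+ n * cos (dotk (dualpt R y) (zshift z j (-1)))))).
  apply: eq_bigr => y _.
  rewrite exprS; set W := gg y ^+ n; set C := cos (dotk (dualpt R y) z).
  rewrite gg_cos -mulrA mulrBl mulr_suml; congr (_ - _).
  apply: eq_bigr => j _.
  rewrite !dotk_shift mulr1 intrN mulrN1 cosD cosB.
  rewrite /C; ring.
rewrite sumrB -mulr_sumr; congr (_ - _).
rewrite exchange_big /=; apply: eq_bigr => j _.
by rewrite -mulr_sumr -big_split.
Qed.

Definition bad (n : nat) (z : 'I_nu -> int) :=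
  forall m : 'I_nu -> int, (\sum_j `|m j| <= n)%N ->
  exists j, ~~ ((2 * L)%:Z %| z j + m j)%Z.

Lemma bad_shift n z j e : (`|e| <= 1)%N -> bad n.+1 z -> bad n (zshift z j e).
Proof.
move=> he hb m hm.
have hs : (\sum_i `|zshift m j e i| <= n.+1)%N.
  apply: (@leq_trans (\sum_i (`|m i| + (i == j))%N)).
    apply: leq_sum => i _; rewrite /zshift.
    case: (i == j) => /=; lia.
  rewrite big_split /=.
  have -> : (\sum_(i < nu) (i == j) = 1)%N.
    by rewrite (bigD1 j) //= eqxx big1 // => i /negbTE ->.
  by rewrite addn1.
have [i hi] := hb _ hs.
exists i; move: hi; rewrite /zshift.
by have -> : z i + (i == j)%:Z * e + m i = z i + (m i + (i == j)%:Z * e) by ring.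
Qed.

Lemma bad_le n z : bad n.+1 z -> bad n z.
Proof. by move=> hb m hm; apply: hb; apply: leq_trans hm _. Qed.

Lemma Qbad n z : bad n z -> Qn n z = 0.
Proof.
elim: n z => [|n IH] z hb.
  have hz0 : (\sum_j `|(fun _ : 'I_nu => 0%:Z) j| <= 0)%N by rewrite big1.
  have [j hj] := hb _ hz0.
  rewrite /Qn; under eq_bigr do rewrite expr0 mul1r.
  apply: (@cossum R nu L hL z j).
  by move: hj; rewrite addr0.
rewrite Qrec (IH z (@bad_le n z hb)) mulr0 sub0r big1 ?oppr0 // => j _.
by rewrite (IH _ (@bad_shift n z j 1 isT hb)) (IH _ (@bad_shift n z j (-1) isT hb)) addr0 mulr0.
Qed.

Lemma local_x (x : 'I_nu -> int) n : inLambda L x -> (n < \sum_j `|x j|)%N -> bad n x.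
Proof.
move=> hx hn m hm.
case: (boolP [exists j, (`|m j| < `|x j|)%N]) => [/existsP[j hj] | /existsPn H].
  exists j; apply/negP => /dvdzP[q hq].
  have := hx j; move=> /andP[h1 h2].
  have L0 : (0 < L)%N := hL.
  have [q0|[qp|qn]] : q = 0 \/ (1 <= q)%R \/ (q <= -1)%R by lia.
  - move: hq; rewrite q0 mul0r => hq; lia.
  - have hp : ((2 * L)%:Z <= q * (2 * L)%:Z)%R.
      by rewrite -{1}(mul1r ((2 * L)%:Z)) ler_wpM2r.
    lia.
  - have hp : (q * (2 * L)%:Z <= - (2 * L)%:Z)%R.
      by rewrite -mulN1r ler_wpM2r.
    lia.
have : (\sum_j `|x j| <= \sum_j `|m j|)%N.
  by apply: leq_sum => j _; rewrite leqNgt; exact: H.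
lia.
Qed.

End Local.

Section Sym.
Variables (R : realType) (nu : nat) (omega : R) (lam : 'I_nu -> R) (L : nat).
Hypothesis hL : (0 < L)%N.
Local Notation Y := {ffun 'I_nu -> 'I_(2 * L)}.

Lemma ref_lt (r : 'I_(2 * L)) : (2 * L - 2 - r < 2 * L)%N.
Proof. have := hL; lia. Qed.

Definition ref (r : 'I_(2 * L)) : 'I_(2 * L) :=
  if (r : nat) == (2 * L).-1 then r else Ordinal (ref_lt r).

Lemma vref r : (ref r : nat) = if (r : nat) == (2 * L).-1 then (r : nat) else (2 * L - 2 - r)%N.
Proof. by rewrite /ref; case: ifP. Qed.

Lemma refK : involutive ref.
Proof.
move=> r; apply: val_inj; rewrite /= !vref.
have hr := ltn_ord r.
case E: ((r : nat) == (2 * L).-1); first by rewrite E.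
have -> : ((2 * L - 2 - r)%N == (2 * L).-1) = false.
  by apply/negbTE/eqP; have := hL; lia.
by move/negbT/eqP: E => E /=; have := hL; lia.
Qed.

Definition sig (y : Y) : Y := [ffun j => ref (y j)].

Lemma sigK : involutive sig.
Proof. by move=> y; apply/ffunP => j; rewrite !ffunE refK. Qed.

Lemma sig_inj : injective sig.
Proof. exact: inv_inj sigK. Qed.

Lemma lp_ref (r : 'I_(2 * L)) :
  lp L (ref r) = if (r : nat) == (2 * L).-1 then lp L r else - lp L r.
Proof.
rewrite /lp vref; have hr := ltn_ord r.
case E: ((r : nat) == (2 * L).-1) => //.
move/negbT/eqP: E => E; have := hL; lia.
Qed.

Lemma lp_top (r : 'I_(2 * L)) : (r : nat) == (2 * L).-1 -> lp L r = L%:Z.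
Proof. by rewrite /lp => /eqP ->; have := hL; lia. Qed.

Lemma dualpt_sig_sin (y : Y) j :
  sin (dualpt R (sig y) j / 2) ^+ 2 = sin (dualpt R y j / 2) ^+ 2.
Proof.
rewrite /dualpt /latpt ffunE.
have -> : ((ref (y j) : nat)%:Z - L%:Z + 1) = lp L (ref (y j)) by [].
have -> : (((y j : nat))%:Z - L%:Z + 1) = lp L (y j) by [].
rewrite lp_ref; case: ifP => // _.
by rewrite intrN mulrN mulNr mulNr sinN sqrrN.
Qed.

Lemma gam_sig (y : Y) : gam omega lam (dualpt R (sig y)) = gam omega lam (dualpt R y).
Proof.
rewrite /gam; congr (Num.sqrt (_ + 4 * _)); apply: eq_bigr => j _.
by rewrite dualpt_sig_sin.
Qed.

Lemma dotk_sig (y : Y) (x : 'I_nu -> int) :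
  dotk (dualpt R (sig y)) x = - dotk (dualpt R y) x +
     2 * pi * (\sum_j (((y j : nat) == (2 * L).-1)%:Z * x j))%:~R.
Proof.
rewrite /dotk -sumrN raddf_sum /= mulr_sumr -big_split /=.
apply: eq_bigr => j _.
rewrite /dualpt /latpt ffunE.
have -> : ((ref (y j) : nat)%:Z - L%:Z + 1) = lp L (ref (y j)) by [].
have -> : (((y j : nat))%:Z - L%:Z + 1) = lp L (y j) by [].
rewrite lp_ref intrM; case: ifP => E.
  rewrite (@lp_top (y j) E).
  have -> : ((L%:Z)%:~R : R) = L%:R by [].
  have -> : ((1%:Z)%:~R : R) = 1 by [].
  by field; rewrite pnatr_eq0 -lt0n.
have -> : ((0%:Z)%:~R : R) = 0 by [].
by rewrite intrN; ring.
Qed.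

Lemma sin_sig (y : Y) x :
  sin (dotk (dualpt R (sig y)) x) = - sin (dotk (dualpt R y) x).
Proof.
rewrite dotk_sig.
have := @cexpi_2piz R (- dotk (dualpt R y) x) (\sum_j (((y j : nat) == (2 * L).-1)%:Z * x j)).
move=> /(congr1 (@complex.Im R)); rewrite !cexpi_Im => ->.
by rewrite sinN.
Qed.

Lemma sym_sum (F : R -> R) x :
  \sum_(y : Y) F (gam omega lam (dualpt R y)) * sin (dotk (dualpt R y) x) = 0.
Proof.
set S := \sum_(y : Y) _.
have : S = - S.
  rewrite {1}/S (reindex_inj sig_inj) /= /S -sumrN.
  by apply: eq_bigr => y _; rewrite gam_sig sin_sig mulrN.
move/eqP; rewrite -subr_eq0 opprK -mulr2n -mulr_natr mulf_eq0 pnatr_eq0 orbF.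
by move/eqP.
Qed.

End Sym.

Section Main.
Variables (R : realType) (nu : nat) (omega : R) (lam : 'I_nu -> R) (L : nat).
Hypothesis hL : (0 < L)%N.
Hypothesis hom : 0 < omega.
Hypothesis hlam : forall j, 0 <= lam j.
Variable x : 'I_nu -> int.
Hypothesis hx : inLambda L x.
Local Notation Y := {ffun 'I_nu -> 'I_(2 * L)}.
Local Notation N := (cardLambda R nu L).
Local Notation G y := (gam omega lam (dualpt R y)).
Local Notation ph y := (dotk (dualpt R y) x).
Local Notation c := (cwl omega lam).

Definition Cw (u : R -> R) := N^-1 * \sum_(y : Y) u (G y) * cos (ph y).

Lemma Cw_ext u v : (forall g, u g = v g) -> Cw u = Cw v.
Proof. by move=> e; rewrite /Cw; congr (_ * _); apply: eq_bigr => y _; rewrite e. Qed.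

Lemma CwD u v : Cw (fun g => u g + v g) = Cw u + Cw v.
Proof. by rewrite /Cw -mulrDr -big_split /=; congr (_ * _); apply: eq_bigr => y _; rewrite mulrDl. Qed.

Lemma N_card : N = #|{: Y}|%:R.
Proof. by rewrite /cardLambda card_ffun !card_ord. Qed.

Lemma N_gt0 : 0 < N.
Proof. by rewrite /cardLambda ltr0n expn_gt0 muln_gt0 hL. Qed.

Lemma G_gt0 (y : Y) : 0 < G y.
Proof.
rewrite /gam sqrtr_gt0; apply: (lt_le_trans (_ : 0 < omega ^+ 2)); first by rewrite exprn_gt0.
rewrite lerDl; apply: mulr_ge0 => //; apply: sumr_ge0 => j _; apply: mulr_ge0 => //; exact: sqr_ge0.
Qed.

Lemma G_le_c (y : Y) : G y <= c.
Proof.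
rewrite /gam /cwl ler_sqrt; last first.
  apply: addr_ge0; first exact: sqr_ge0.
  by apply: mulr_ge0 => //; apply: sumr_ge0.
rewrite lerD2l ler_pM2l // ler_sum // => j _.
by rewrite -[leRHS]mulr1 ler_wpM2l // sin2cos2 gerBl sqr_ge0.
Qed.

Lemma c_gt0 : 0 < c.
Proof.
rewrite /cwl sqrtr_gt0; apply: (lt_le_trans (_ : 0 < omega ^+ 2)); first by rewrite exprn_gt0.
by rewrite lerDl; apply: mulr_ge0 => //; apply: sumr_ge0.
Qed.


Lemma Re_cC (a : R) (z : R[i]) : complex.Re ((a%:C)%C * z) = a * complex.Re z.
Proof. by case: z => u v /=; rewrite mul0r subr0. Qed.

Lemma Im_cC (a : R) (z : R[i]) : complex.Im ((a%:C)%C * z) = a * complex.Im z.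
Proof. by case: z => u v /=; rewrite mul0r addr0. Qed.

Lemma Re_lsum f t : complex.Re (lsum omega lam L f t x) = Cw (fun g => f g * cos (2 * g * t)).
Proof.
rewrite /lsum Re_cC Re_sum /Cw; congr (_ * _).
under eq_bigr do rewrite Re_cC cexpi_Re cosB.
transitivity (\sum_(y : Y) (f (G y) * cos (2 * G y * t)) * cos (ph y) +
              \sum_(y : Y) (f (G y) * sin (2 * G y * t)) * sin (ph y)).
  by rewrite -big_split; apply: eq_bigr => y _ /=; ring.
by rewrite (@sym_sum R nu omega lam L hL (fun g => f g * sin (2 * g * t)) x) addr0.
Qed.

Lemma Im_lsum f t : complex.Im (lsum omega lam L f t x) = - Cw (fun g => f g * sin (2 * g * t)).
Proof.
rewrite /lsum Im_cC Im_sum /Cw -mulrN; congr (_ * _).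
under eq_bigr do rewrite Im_cC cexpi_Im sinB.
transitivity (\sum_(y : Y) (f (G y) * cos (2 * G y * t)) * sin (ph y) -
              \sum_(y : Y) (f (G y) * sin (2 * G y * t)) * cos (ph y)).
  by rewrite -sumrB; apply: eq_bigr => y _ /=; ring.
by rewrite (@sym_sum R nu omega lam L hL (fun g => f g * cos (2 * g * t)) x) sub0r.
Qed.

Definition dx := (\sum_j `|x j|)%N.

Lemma F0 n : (n < dx)%N -> Qn R nu omega lam L n x = 0.
Proof. by move=> hn; apply: Qbad => //; apply: local_x. Qed.

Lemma F_bound n : `|N^-1 * Qn R nu omega lam L n x| <= c ^+ (n.*2).
Proof.
have N0 := N_gt0.
rewrite normrM ger0_norm; last by rewrite invr_ge0 ltW.
rewrite ler_pdivrMl //.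
apply: (le_trans (ler_norm_sum _ _ _)).
apply: (@le_trans _ _ (\sum_(y : Y) c ^+ (n.*2))).
  apply: ler_sum => y _; rewrite normrM -[leRHS]mulr1 ler_pM //; last exact: cos_max.
  rewrite normrX ger0_norm /gg; last exact: sqr_ge0.
  rewrite -mul2n exprM; apply: lerXn2r; [exact: sqr_ge0 | exact: sqr_ge0 |].
  have g0 := ltW (G_gt0 y); rewrite !expr2; apply: ler_pM => //; exact: G_le_c.
by rewrite sumr_const N_card mulr_natl.
Qed.

Lemma tb (th T cc f : R) (D p e : nat) : 0 <= th -> 0 <= T -> 0 <= cc -> 0 <= f ->
  f <= cc ^+ e * cc ^+ p -> ((p + e < D)%N -> f = 0) ->
  T ^+ p / p`!%:R * f <= cc ^+ e * (expR (th * e%:R - th * D%:R) * ((expR th * (T * cc)) ^+ p / p`!%:R)).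
Proof.
move=> th0 T0 c0 f0 fle fz.
have pf : 0 < (p`!%:R : R) by rewrite ltr0n fact_gt0.
have [hlt|hge] := ltnP (p + e) D.
  rewrite fz // mulr0; apply: mulr_ge0; first exact: exprn_ge0.
  apply: mulr_ge0; first exact: expR_ge0.
  apply: divr_ge0; last exact: ltW.
  by apply: exprn_ge0; apply: mulr_ge0 => //; apply: mulr_ge0 => //; exact: expR_ge0.
have ex : expR (th * e%:R - th * D%:R) * (expR th * (T * cc)) ^+ p =
          expR (th * (p + e)%:R - th * D%:R) * (T * cc) ^+ p.
  rewrite exprMn -expRM_natl mulrA -expRD natrD; congr (expR _ * _); ring.
have E1 : 1 <= expR (th * (p + e)%:R - th * D%:R).
  by apply: expR_ge1; rewrite subr_ge0 ler_wpM2l // ler_nat.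
apply: (@le_trans _ _ (T ^+ p / p`!%:R * (cc ^+ e * cc ^+ p))).
  by rewrite ler_wpM2l // divr_ge0 ?exprn_ge0 // ltW.
have h : 0 <= cc ^+ e * (T ^+ p * cc ^+ p) / p`!%:R.
  by rewrite divr_ge0 ?mulr_ge0 ?exprn_ge0 // ltW.
have -> : T ^+ p / p`!%:R * (cc ^+ e * cc ^+ p) = cc ^+ e * (T ^+ p * cc ^+ p) / p`!%:R * 1 by ring.
have -> : cc ^+ e * (expR (th * e%:R - th * D%:R) * ((expR th * (T * cc)) ^+ p / p`!%:R)) =
   cc ^+ e * (T ^+ p * cc ^+ p) / p`!%:R * expR (th * (p + e)%:R - th * D%:R).
  transitivity (cc ^+ e * ((expR (th * e%:R - th * D%:R) * (expR th * (T * cc)) ^+ p) / p`!%:R)).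
    by ring.
  by rewrite ex exprMn; ring.
by rewrite ler_wpM2l.
Qed.

Lemma P1_bound t th : 0 <= th ->
  `|Cw (fun g => cos (2 * g * t))| <= expR (expR th * (2 * `|t| * c) - th * (dx.*2)%:R).
Proof.
move=> th0.
have c0 := c_gt0.
have -> : Cw (fun g => cos (2 * g * t)) = \sum_(y : Y) (N^-1 * cos (ph y)) * cos (2 * G y * t).
  by rewrite /Cw mulr_sumr; apply: eq_bigr => y _; ring.
apply: (@lim_sum_bound R _ (fun y : Y => N^-1 * cos (ph y)) (fun y => series (cos_coeff' (2 * G y * t))) (fun y => cos (2 * G y * t))) => [y|M]; first exact: cvg_cos_coeff'.
rewrite /series /=.
under eq_bigr do rewrite mulr_sumr.
rewrite exchange_big /=.
apply: (le_trans (ler_norm_sum _ _ _)).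
apply: (@le_trans _ _ (\sum_(0 <= k < M) c ^+ 0 * (expR (th * 0%:R - th * (dx.*2)%:R) *
     ((expR th * (2 * `|t| * c)) ^+ (k.*2) / (k.*2)`!%:R)))).
  apply: ler_sum => k _.
  have -> : \sum_(y : Y) N^-1 * cos (ph y) * cos_coeff' (2 * G y * t) k =
     ((-1) ^ k * (2 * t) ^+ (k.*2) / (k.*2)`!%:R) * (N^-1 * Qn R nu omega lam L k x).
    rewrite /Qn !mulr_sumr; apply: eq_bigr => y _.
    rewrite /cos_coeff' /gg.
    have -> : (2 * G y * t) ^+ (k.*2) = (2 * t) ^+ (k.*2) * (G y ^+ 2) ^+ k.
      by rewrite -mul2n !exprM -exprMn; congr (_ ^+ _); ring.
    ring.
  rewrite normrM.
  have -> : `|(-1) ^ k * (2 * t) ^+ (k.*2) / (k.*2)`!%:R| = (2 * `|t|) ^+ (k.*2) / (k.*2)`!%:R.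
    have -> : ((-1 : R) ^ k) = (-1) ^+ k by [].
    rewrite normrM normrM normr_sign mul1r normrX normrM normfV.
    by rewrite (@ger0_norm _ (2 : R)) // (@ger0_norm _ (_`!%:R : R)).
  apply: tb.
  - done.
  - by rewrite mulr_ge0 // normr_ge0.
  - exact: ltW.
  - exact: normr_ge0.
  - by rewrite expr0 mul1r; exact: F_bound.
  - by rewrite addn0 -!mul2n ltn_pmul2l // => /F0 ->; rewrite mulr0 normr0.
rewrite -mulr_sumr expr0 mul1r mulr0n mulr0 sub0r.
rewrite big_mkord -mulr_sumr.
apply: (@le_trans _ _ (expR (- (th * (dx.*2)%:R)) * expR (expR th * (2 * `|t| * c)))).
  rewrite ler_wpM2l ?expR_ge0 //; apply: exp_even.
  by apply: mulr_ge0; [exact: expR_ge0 | rewrite mulr_ge0 ?normr_ge0 // ltW].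
by rewrite -expRD addrC.
Qed.

Lemma P2_bound t th : 0 <= th ->
  `|Cw (fun g => g * sin (2 * g * t))| <= c * expR (th + expR th * (2 * `|t| * c) - th * (dx.*2)%:R).
Proof.
move=> th0.
have c0 := c_gt0.
have -> : Cw (fun g => g * sin (2 * g * t)) = \sum_(y : Y) (N^-1 * cos (ph y) * G y) * sin (2 * G y * t).
  by rewrite /Cw mulr_sumr; apply: eq_bigr => y _; ring.
apply: (@lim_sum_bound R _ (fun y : Y => N^-1 * cos (ph y) * G y) (fun y => series (sin_coeff' (2 * G y * t))) (fun y => sin (2 * G y * t))) => [y|M]; first exact: cvg_sin_coeff'.
rewrite /series /=.
under eq_bigr do rewrite mulr_sumr.
rewrite exchange_big /=.
apply: (le_trans (ler_norm_sum _ _ _)).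
apply: (@le_trans _ _ (\sum_(0 <= k < M) c ^+ 1 * (expR (th * 1%:R - th * (dx.*2)%:R) *
     ((expR th * (2 * `|t| * c)) ^+ (k.*2.+1) / (k.*2.+1)`!%:R)))).
  apply: ler_sum => k _.
  have -> : \sum_(y : Y) N^-1 * cos (ph y) * G y * sin_coeff' (2 * G y * t) k =
     ((-1) ^ k * (2 * t) ^+ (k.*2.+1) / (k.*2.+1)`!%:R) * (N^-1 * Qn R nu omega lam L k.+1 x).
    rewrite /Qn !mulr_sumr; apply: eq_bigr => y _.
    rewrite /sin_coeff' /gg [(G y ^+ 2) ^+ k.+1]exprS.
    have e1 : (2 * G y * t) ^+ 2 = (2 * t) ^+ 2 * G y ^+ 2 by ring.
    have -> : (2 * G y * t) ^+ (k.*2.+1) = (2 * t) ^+ (k.*2.+1) * (G y ^+ 2) ^+ k * G y.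
      rewrite -mul2n [(2 * G y * t) ^+ _]exprS [(2 * t) ^+ _]exprS !exprM e1 exprMn; ring.
    ring.
  rewrite normrM.
  have -> : `|(-1) ^ k * (2 * t) ^+ (k.*2.+1) / (k.*2.+1)`!%:R| = (2 * `|t|) ^+ (k.*2.+1) / (k.*2.+1)`!%:R.
    have -> : ((-1 : R) ^ k) = (-1) ^+ k by [].
    rewrite normrM normrM normr_sign mul1r normrX normrM normfV.
    by rewrite (@ger0_norm _ (2 : R)) // (@ger0_norm _ (_`!%:R : R)).
  apply: tb.
  - done.
  - by rewrite mulr_ge0 // normr_ge0.
  - exact: ltW.
  - exact: normr_ge0.
  - by rewrite -exprD addnC addn1; exact: (F_bound k.+1).
  - move=> h; rewrite F0 ?mulr0 ?normr0 //; move: h; rewrite addn1 -!mul2n; lia.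
rewrite -mulr_sumr expr1 mulr1.
rewrite big_mkord -mulr_sumr.
apply: ler_wpM2l; first exact: ltW.
apply: (@le_trans _ _ (expR (th - th * (dx.*2)%:R) * expR (expR th * (2 * `|t| * c)))).
  rewrite ler_wpM2l ?expR_ge0 //; apply: exp_odd.
  by apply: mulr_ge0; [exact: expR_ge0 | rewrite mulr_ge0 ?normr_ge0 // ltW].
by rewrite -expRD (_ : th - th * (dx.*2)%:R + expR th * (2 * `|t| * c) = th + expR th * (2 * `|t| * c) - th * (dx.*2)%:R) //; ring.
Qed.


Lemma Cw_triv (u : R -> R) (b : R) : (forall g, 0 < g <= c -> `|u g| <= b) -> `|Cw u| <= b.
Proof.
move=> hu.
have N0 := N_gt0.
rewrite /Cw normrM ger0_norm; last by rewrite invr_ge0 ltW.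
rewrite ler_pdivrMl //.
apply: (le_trans (ler_norm_sum _ _ _)).
apply: (@le_trans _ _ (\sum_(y : Y) b)).
  apply: ler_sum => y _; rewrite normrM -[leRHS]mulr1 ler_pM //; last exact: cos_max.
  by apply: hu; rewrite G_gt0 G_le_c.
by rewrite sumr_const N_card mulr_natl.
Qed.

Lemma CwB u v : Cw (fun g => u g - v g) = Cw u - Cw v.
Proof. by rewrite /Cw -mulrBr -sumrB /=; congr (_ * _); apply: eq_bigr => y _; rewrite mulrBl. Qed.

Lemma B1 (mu t : R) : 0 < mu ->
  `|Cw (fun g => cos (2 * g * t))| <= expR (Kc R mu * (2 * `|t| * c) - mu * dx%:R).
Proof.
move=> mu0.
apply: scalP1.
- done.
- by rewrite mulr_ge0 ?mulr_ge0 ?normr_ge0 // ltW // c_gt0.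
- by rewrite ler0n.
- by apply: Cw_triv => g _; exact: cos_max.
- move=> th th0; have h := P1_bound t th th0.
  have e : 2 * th * dx%:R = th * (dx.*2)%:R by rewrite -mul2n natrM; ring.
  by rewrite e.
Qed.

Lemma B2 (mu t : R) : 0 < mu ->
  `|Cw (fun g => g * sin (2 * g * t))| <= c * expR (mu / 2 + (Kc R mu * (2 * `|t| * c) - mu * dx%:R)).
Proof.
move=> mu0.
have c0 := c_gt0.
rewrite -ler_pdivrMl //.
apply: scalP2.
- done.
- by rewrite mulr_ge0 ?mulr_ge0 ?normr_ge0 // ltW.
- by rewrite ler0n.
- rewrite ler_pdivrMl // mulr1.
  apply: Cw_triv => g /andP[g0 gc]; rewrite normrM (ger0_norm (ltW g0)).
  by rewrite -[leRHS]mulr1; apply: ler_pM; [exact: ltW | exact: normr_ge0 | done | exact: sin_max].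
- move=> th th0; have h := P2_bound t th th0.
  have e : 2 * th * dx%:R = th * (dx.*2)%:R by rewrite -mul2n natrM; ring.
  by rewrite e ler_pdivrMl.
Qed.

Lemma is_derive_mulc (f : R -> R) (u df a : R) :
  is_derive u (1:R) f df -> is_derive u (1:R) (fun z => f z * a) (df * a).
Proof.
move=> hf.
have -> : (fun z => f z * a) = a \*: f by apply/funext => z; rewrite /= /GRing.scale /= mulrC.
have h := @is_deriveZ R R^o R^o f a u 1 df hf.
by rewrite /GRing.scale /= mulrC in h.
Qed.

Lemma is_derive_seqsum (s : seq Y) (f : Y -> R -> R) (df : Y -> R) (u : R) :
  (forall y, is_derive u (1:R) (f y) (df y)) ->
  is_derive u (1:R) (fun z => \sum_(y <- s) f y z) (\sum_(y <- s) df y).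
Proof.
move=> hf; elim: s => [|a s IH].
  have -> : (fun z => \sum_(y <- [::]) f y z) = cst 0 by apply/funext => z; rewrite big_nil.
  rewrite big_nil; exact: is_derive_cst.
have -> : (fun z => \sum_(y <- a :: s) f y z) = f a + (fun z => \sum_(y <- s) f y z).
  by apply/funext => z; rewrite big_cons.
rewrite big_cons.
exact: (@is_deriveD R R^o R^o (f a) (fun z => \sum_(y <- s) f y z) u 1 _ _ (hf a) IH).
Qed.

Definition Phi (z : R) := \sum_(y : Y) sin (2 * G y * z) * (N^-1 * cos (ph y) / (2 * G y)).

Lemma Phi_derive u : is_derive u (1:R) Phi (Cw (fun g => cos (2 * g * u))).
Proof.
have -> : Cw (fun g => cos (2 * g * u)) =
    \sum_(y : Y) cos (2 * G y * u) * (2 * G y) * (N^-1 * cos (ph y) / (2 * G y)).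
  rewrite /Cw mulr_sumr; apply: eq_bigr => y _.
  have := G_gt0 y => g0.
  by field; rewrite (gt_eqF g0) /= (gt_eqF N_gt0).
apply: is_derive_seqsum => y.
apply: is_derive_mulc.
have hlin : is_derive u (1:R) (fun z : R => 2 * G y * z) (2 * G y * 1) by typeclasses eauto.
rewrite mulr1 in hlin.
exact: (@is_derive1_comp R sin (fun z : R => 2 * G y * z) u _ _ (is_derive_sin (2 * G y * u)) hlin).
Qed.

Lemma Phi0 : Phi 0 = 0.
Proof. by rewrite /Phi big1 // => y _; rewrite mulr0 sin0 mul0r. Qed.

Lemma PhiN z : Phi (- z) = - Phi z.
Proof. by rewrite /Phi -sumrN; apply: eq_bigr => y _; rewrite mulrN sinN mulNr. Qed.

Lemma B3 (mu t : R) : 0 < mu ->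
  `|Cw (fun g => sin (2 * g * t) / g)| <= expR (Kc R mu * (2 * `|t| * c) - mu * dx%:R) / c.
Proof.
move=> mu0.
have c0 := c_gt0.
have K1 := @Kc_ge1 R mu mu0.
have Kpos : 0 < Kc R mu by apply: (lt_le_trans _ K1); exact: ltr01.
have Apos : 0 < 2 * c * Kc R mu by apply: mulr_gt0 => //; apply: mulr_gt0.
have -> : Cw (fun g => sin (2 * g * t) / g) = 2 * Phi t.
  rewrite /Cw /Phi !mulr_sumr; apply: eq_bigr => y _.
  have := G_gt0 y => g0.
  by field; rewrite (gt_eqF g0) /= (gt_eqF N_gt0).
have hP : forall u, 0 <= u -> `|Cw (fun g => cos (2 * g * u))| <= expR (2 * c * Kc R mu * u - mu * dx%:R).
  move=> u u0; apply: (le_trans (B1 mu u mu0)).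
  by rewrite (ger0_norm u0) (_ : Kc R mu * (2 * u * c) = 2 * c * Kc R mu * u) //; ring.
have hb := @deriv_bound R Phi (fun u => Cw (fun g => cos (2 * g * u))) (2 * c * Kc R mu) (mu * dx%:R) Apos Phi_derive Phi0 hP.
have hPt : `|Phi t| = `|Phi (`|t|)|.
  have [t0|t0] := leP 0 t; first by rewrite (ger0_norm t0).
  by rewrite (ltr0_norm t0) PhiN normrN.
rewrite normrM ger0_norm // hPt.
apply: (@le_trans _ _ (2 * (expR (2 * c * Kc R mu * `|t| - mu * dx%:R) / (2 * c * Kc R mu)))).
  by rewrite ler_wpM2l // hb.
have -> : Kc R mu * (2 * `|t| * c) = 2 * c * Kc R mu * `|t| by ring.
set X := expR _.
have X0 : 0 <= X by exact: expR_ge0.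
have -> : 2 * (X / (2 * c * Kc R mu)) = X / c / Kc R mu by field; rewrite !gt_eqF.
rewrite ler_pdivrMr // ler_peMr //.
by rewrite divr_ge0 // ltW.
Qed.


Lemma l1norm_dx : l1norm R x = dx%:R.
Proof. by rewrite /l1norm /dx natr_sum; apply: eq_bigr => j _; rewrite natr_absz. Qed.

Lemma normc_le (a b : R) : Normc.normc ((a +i* b)%C) <= `|a| + `|b|.
Proof.
rewrite /Normc.normc.
have hab : 0 <= `|a| + `|b| by rewrite addr_ge0.
rewrite -(ger0_norm hab) -sqrtr_sqr ler_sqrt; last exact: sqr_ge0.
have ha : a ^+ 2 = `|a| ^+ 2 by rewrite -normrX ger0_norm // sqr_ge0.
have hb : b ^+ 2 = `|b| ^+ 2 by rewrite -normrX ger0_norm // sqr_ge0.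
rewrite ha hb.
have : 0 <= `|a| * `|b| by rewrite mulr_ge0.
move=> h; rewrite sqrrD; lra.
Qed.

Lemma main_bound (mu t : R) : 0 < mu ->
  Normc.normc (h1 omega lam L t x) <= hbound omega lam mu t x /\
  Normc.normc (h2 omega lam L t x) <= hbound omega lam mu t x.
Proof.
move=> mu0.
have c0 := c_gt0.
set E := Kc R mu * (2 * `|t| * c) - mu * dx%:R.
have hE : hbound omega lam mu t x = (1 + c * expR (mu / 2) / 2 + c^-1 / 2) * expR E.
  by rewrite /hbound /= l1norm_dx /E /Kc; congr (_ * expR _); field.
have b1 := B1 mu t mu0.
have b2 := B2 mu t mu0.
have b3 := B3 mu t mu0.
rewrite -/E in b1 b2 b3.
rewrite expRD in b2.
set X := expR E in b1 b2 b3 hE.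
have X0 : 0 <= X by exact: expR_ge0.
set P := c * (expR (mu / 2) * X) in b2.
set Q := X / c in b3.
have hb : hbound omega lam mu t x = X + P / 2 + Q / 2 by rewrite hE /P /Q; ring.
have hRe : complex.Re (lsum omega lam L (fun _ => 1) t x) = Cw (fun g => cos (2 * g * t)).
  by rewrite Re_lsum; apply: Cw_ext => g; rewrite mul1r.
have hIa : complex.Im (lsum omega lam L (fun g => g + g^-1) t x) =
    - (Cw (fun g => g * sin (2 * g * t)) + Cw (fun g => sin (2 * g * t) / g)).
  rewrite Im_lsum -CwD; congr (- _); apply: Cw_ext => g; ring.
have hIb : complex.Im (lsum omega lam L (fun g => g - g^-1) t x) =
    - (Cw (fun g => g * sin (2 * g * t)) - Cw (fun g => sin (2 * g * t) / g)).
  rewrite Im_lsum -CwB; congr (- _); apply: Cw_ext => g; ring.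
set A1 := Cw (fun g => cos (2 * g * t)) in b1 hRe.
set A2 := Cw (fun g => g * sin (2 * g * t)) in b2 hIa hIb.
set A3 := Cw (fun g => sin (2 * g * t) / g) in b3 hIa hIb.
have P0 : 0 <= P by apply: le_trans b2; exact: normr_ge0.
have Q0 : 0 <= Q by apply: le_trans b3; exact: normr_ge0.
rewrite hb; split.
  have -> : h1 omega lam L t x =
      (complex.Re (lsum omega lam L (fun _ => 1) t x) +i*
       (complex.Im (lsum omega lam L (fun g => g + g^-1) t x) / 2))%C.
    by rewrite /h1 /=; congr Complex; ring.
  apply: (le_trans (normc_le _ _)); rewrite hRe hIa.
  have : `|- (A2 + A3) / 2| <= (`|A2| + `|A3|) / 2.
    by rewrite normrM normrN (ger0_norm (_ : 0 <= 2^-1)) ?invr_ge0 // ler_wpM2r ?invr_ge0 // ler_normD.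
  lra.
have -> : h2 omega lam L t x =
    (0 +i* (complex.Im (lsum omega lam L (fun g => g - g^-1) t x) / 2))%C.
  by rewrite /h2 /=; congr Complex; ring.
apply: (le_trans (normc_le _ _)); rewrite hIb normr0 add0r.
have : `|- (A2 - A3) / 2| <= (`|A2| + `|A3|) / 2.
  by rewrite normrM normrN (ger0_norm (_ : 0 <= 2^-1)) ?invr_ge0 // ler_wpM2r ?invr_ge0 // ler_normB.
lra.
Qed.

End Main.

Theorem lemma3p4 (R : realType) (nu : nat) (omega : R) (lam : 'I_nu -> R)
  (L : nat) (mu t : R) (x : 'I_nu -> int) :
  (1 <= nu)%N -> 0 < omega -> (forall j, 0 <= lam j) -> (0 < L)%N ->
  0 < mu -> inLambda L x ->
  Normc.normc (h1 omega lam L t x) <= hbound omega lam mu t x /\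
  Normc.normc (h2 omega lam L t x) <= hbound omega lam mu t x.
Proof.
move=> hnu hom hlam hL hmu hx.
by apply: main_bound.
Qed.
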